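(* Let $\mathsf E$ be a small preadditive category and $R=R_{\mathsf E}$ the associated ring. Then the category of c-unital left $R$-modules is naturally equivalent to the category of left $\mathsf E$-modules. The equivalence assigns to a left $\mathsf E$-module $\mathsf P$ the c-unital left $R$-module $P=\prod_{x\in\mathsf E}\mathsf P(x)$, with the action of $R$ on $P$ induced by the action of $\mathsf E$ on $\mathsf P$.
   Context: A small preadditive category is a small category enriched in abelian groups. Its associated ring is $R_{\mathsf E}=\bigoplus_{x,y\in\mathsf E}\mathrm{Hom}_{\mathsf E}(x,y)$, with multiplication given by composition of composable morphisms and zero product for noncomposable ones (a nonunital associative ring when $\mathsf E$ has infinitely many objects). A left $\mathsf E$-module is an additive covariant functor $\mathsf E\to\mathsf{Ab}$. Modules over $R$ are not assumed unital; a left $R$-module $P$ is c-unital if the natural map $P\to\mathrm{Hom}_R(R,P)$, $p\mapsto(r\mapsto rp)$, is an isomorphism. *)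

(* Defs.v *)
From Stdlib Require Import List ClassicalEpsilon Classical FunctionalExtensionality.
Import ListNotations.

Set Implicit Arguments.

Record Zmod := {
  zcar :> Type;
  zzero : zcar;
  zadd : zcar -> zcar -> zcar;
  zopp : zcar -> zcar;
  zaddA : forall a b c, zadd a (zadd b c) = zadd (zadd a b) c;
  zaddC : forall a b, zadd a b = zadd b a;
  zadd0 : forall a, zadd zzero a = a;
  zaddN : forall a, zadd (zopp a) a = zzero }.
Arguments zzero {_}.
Arguments zadd {_}.
Arguments zopp {_}.
Arguments zaddA {_}.
Arguments zaddC {_}.
Arguments zadd0 {_}.
Arguments zaddN {_}.

Definition additive {A B : Zmod} (f : A -> B) : Prop :=
  forall a b, f (zadd a b) = zadd (f a) (f b).

Lemma z_idem (A : Zmod) (a : A) : zadd a a = a -> a = zzero.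
Proof.
  intro H. rewrite <- (zaddN a). rewrite <- H at 3. rewrite zaddA, zaddN, zadd0.
  reflexivity.
Qed.

Lemma zadd00 (A : Zmod) : zadd (@zzero A) zzero = zzero.
Proof. apply zadd0. Qed.

Record PreaddCat := {
  Obj : Type;
  Hom : Obj -> Obj -> Zmod;
  comp : forall x y z, Hom y z -> Hom x y -> Hom x z;
  idm : forall x, Hom x x;
  comp_assoc : forall w x y z (h : Hom y z) (g : Hom x y) (f : Hom w x),
      comp w y z h (comp w x y g f) = comp w x z (comp x y z h g) f;
  comp_id_l : forall x y (f : Hom x y), comp x y y (idm y) f = f;
  comp_id_r : forall x y (f : Hom x y), comp x x y f (idm x) = f;
  comp_addl : forall x y z (g g' : Hom y z) (f : Hom x y),
      comp x y z (zadd g g') f = zadd (comp x y z g f) (comp x y z g' f);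
  comp_addr : forall x y z (g : Hom y z) (f f' : Hom x y),
      comp x y z g (zadd f f') = zadd (comp x y z g f) (comp x y z g f') }.
Arguments comp {_ _ _ _}.
Arguments idm {_}.

Lemma comp_0l (E : PreaddCat) x y z (f : Hom E x y) :
  comp (@zzero (Hom E y z)) f = zzero.
Proof. apply z_idem. rewrite <- comp_addl, zadd00. reflexivity. Qed.

(** * Finite sums of finitely supported families (classically defined):
    sum over some duplicate-free list containing the support. *)
Definition fsupp {I : Type} {A : Zmod} (g : I -> A) (l : list I) : Prop :=
  NoDup l /\ forall i, g i <> zzero -> In i l.

Definition finsum {I : Type} {A : Zmod} (g : I -> A) : A :=
  match excluded_middle_informative (exists l, fsupp g l) with
  | left H => fold_right (fun i acc => zadd (g i) acc) zzero
                (proj1_sig (constructive_indefinite_description _ H))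
  | right _ => zzero
  end.

Lemma finsum_zero (I : Type) (A : Zmod) (g : I -> A) :
  (forall i, g i = zzero) -> finsum g = zzero.
Proof.
  intro Hg. unfold finsum. destruct excluded_middle_informative; [|reflexivity].
  induction (proj1_sig _) as [|i l IH]; simpl; [reflexivity|].
  rewrite IH, Hg. apply zadd00.
Qed.

(** * The ring R_E = (+)_{x,y} Hom(x,y): finitely supported families *)
Record Relt (E : PreaddCat) := {
  rfun : forall x y, Hom E x y;
  rfin : exists l : list (Obj E * Obj E),
      forall x y, rfun x y <> zzero -> In (x, y) l }.
Arguments rfun {E}.

Section RingR.
Variable E : PreaddCat.

Lemma radd_fin (r s : Relt E) : exists l : list (Obj E * Obj E),
  forall x y, zadd (rfun r x y) (rfun s x y) <> zzero -> In (x, y) l.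
Proof.
  destruct (rfin r) as [lr Hr]; destruct (rfin s) as [ls Hs].
  exists (lr ++ ls). intros x y H. apply in_or_app.
  destruct (classic (rfun r x y = zzero)) as [E1|E1]; [|left; auto].
  destruct (classic (rfun s x y = zzero)) as [E2|E2]; [|right; auto].
  exfalso; apply H; rewrite E1, E2; apply zadd00.
Qed.

Definition radd (r s : Relt E) : Relt E :=
  {| rfun := fun x y => zadd (rfun r x y) (rfun s x y); rfin := radd_fin r s |}.

Definition rmul_fun (r s : Relt E) (x z : Obj E) : Hom E x z :=
  finsum (fun y => comp (rfun r y z) (rfun s x y)).

Lemma rmul_fin (r s : Relt E) : exists l : list (Obj E * Obj E),
  forall x z, rmul_fun r s x z <> zzero -> In (x, z) l.
Proof.
  destruct (rfin r) as [lr Hr]; destruct (rfin s) as [ls Hs].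
  exists (flat_map (fun p => map (fun q => (fst p, snd q)) lr) ls).
  intros x z H.
  destruct (classic (exists y, comp (rfun r y z) (rfun s x y) <> zzero))
    as [[y Hy]|Hn].
  - apply in_flat_map. exists (x, y). split.
    + apply Hs. intro E0. apply Hy. rewrite E0.
      apply z_idem. rewrite <- comp_addr, zadd00. reflexivity.
    + apply in_map_iff. exists (y, z). split; [reflexivity|].
      apply Hr. intro E0. apply Hy. rewrite E0. apply comp_0l.
  - exfalso. apply H. apply finsum_zero. intro y.
    apply NNPP. intro Hy. apply Hn. exists y. exact Hy.
Qed.

Definition rmul (r s : Relt E) : Relt E :=
  {| rfun := rmul_fun r s; rfin := rmul_fin r s |}.

End RingR.

Record RModData (E : PreaddCat) := {
  rm_car : Zmod;
  rm_act : Relt E -> rm_car -> rm_car }.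
Arguments rm_car {E}.
Arguments rm_act {E}.

Section Modules.
Variable E : PreaddCat.

Definition is_RMod (M : RModData E) : Prop :=
  (forall r s m, rm_act M (radd r s) m = zadd (rm_act M r m) (rm_act M s m)) /\
  (forall r m n, rm_act M r (zadd m n) = zadd (rm_act M r m) (rm_act M r n)) /\
  (forall r s m, rm_act M (rmul r s) m = rm_act M r (rm_act M s m)).

Definition RHom_from_R (M : RModData E) (f : Relt E -> rm_car M) : Prop :=
  (forall r s, f (radd r s) = zadd (f r) (f s)) /\
  (forall r s, f (rmul r s) = rm_act M r (f s)).

(* c-unital: the natural map M -> Hom_R(R,M), m |-> (r |-> r m),
   is bijective (it is always an additive map into Hom_R(R,M)). *)
Definition c_unital (M : RModData E) : Prop :=
  (forall m n, (forall r, rm_act M r m = rm_act M r n) -> m = n) /\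
  (forall f, RHom_from_R M f -> exists m, forall r, f r = rm_act M r m).

Definition RLinear (M N : RModData E) (f : rm_car M -> rm_car N) : Prop :=
  additive f /\ (forall r m, f (rm_act M r m) = rm_act N r (f m)).

(** * Left E-modules: additive functors E -> Ab *)
Record EModule := {
  em_obj : Obj E -> Zmod;
  em_act : forall x y, Hom E x y -> em_obj x -> em_obj y;
  em_act_addl : forall x y (f g : Hom E x y) p,
      em_act x y (zadd f g) p = zadd (em_act x y f p) (em_act x y g p);
  em_act_addr : forall x y (f : Hom E x y), additive (em_act x y f);
  em_act_id : forall x p, em_act x x (idm x) p = p;
  em_act_comp : forall x y z (g : Hom E y z) (f : Hom E x y) p,
      em_act x z (comp g f) p = em_act y z g (em_act x y f p) }.

Definition EHom (P Q : EModule) (phi : forall x, em_obj P x -> em_obj Q x) : Prop :=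
  (forall x, additive (phi x)) /\
  (forall x y (f : Hom E x y) p, phi y (em_act P x y f p) = em_act Q x y f (phi x p)).

Section Prod.
Variable P : EModule.
Definition pcar := forall x, em_obj P x.
Definition pzero : pcar := fun x => zzero.
Definition padd (p q : pcar) : pcar := fun x => zadd (p x) (q x).
Definition popp (p : pcar) : pcar := fun x => zopp (p x).
Lemma paddA a b c : padd a (padd b c) = padd (padd a b) c.
Proof. apply functional_extensionality_dep; intro; apply zaddA. Qed.
Lemma paddC a b : padd a b = padd b a.
Proof. apply functional_extensionality_dep; intro; apply zaddC. Qed.
Lemma padd0 a : padd pzero a = a.
Proof. apply functional_extensionality_dep; intro; apply zadd0. Qed.
Lemma paddN a : padd (popp a) a = pzero.
Proof. apply functional_extensionality_dep; intro; apply zaddN. Qed.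
Definition prodZmod : Zmod := @Build_Zmod pcar pzero padd popp paddA paddC padd0 paddN.
End Prod.

Definition F_obj (P : EModule) : RModData E :=
  {| rm_car := prodZmod P;
     rm_act := fun r (p : pcar P) =>
       (fun y => finsum (fun x => em_act P x y (rfun r x y) (p x))) : pcar P |}.

Definition F_mor (P Q : EModule) (phi : forall x, em_obj P x -> em_obj Q x)
  : rm_car (F_obj P) -> rm_car (F_obj Q) :=
  fun (p : pcar P) => (fun x => phi x (p x)) : pcar Q.

End Modules.

(* Main.v *)
Require Import Defs.
From Stdlib Require Import List ClassicalEpsilon Classical FunctionalExtensionality.
Import ListNotations.
Set Implicit Arguments.

Lemma zadd0r {A : Zmod} (a : A) : zadd a zzero = a.
Proof. rewrite zaddC; apply zadd0. Qed.

Lemma zadd_lc {A : Zmod} (a b c : A) : zadd a (zadd b c) = zadd b (zadd a c).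
Proof. rewrite !zaddA, (zaddC a b); reflexivity. Qed.

Lemma zadd_ACA {A : Zmod} (a b c d : A) :
  zadd (zadd a b) (zadd c d) = zadd (zadd a c) (zadd b d).
Proof. rewrite <- !zaddA. f_equal. apply zadd_lc. Qed.

Lemma z_opp_uniq {A : Zmod} (x y : A) : zadd x y = zzero -> x = zopp y.
Proof.
  intro H. rewrite <- (zadd0 x), <- (zaddN y), <- zaddA, (zaddC y x), H.
  apply zadd0r.
Qed.

Lemma additive0 {A B : Zmod} (f : A -> B) : additive f -> f zzero = zzero.
Proof. intro H. apply z_idem. rewrite <- H, zadd00. reflexivity. Qed.

Lemma additiveN {A B : Zmod} (f : A -> B) (a : A) : additive f -> f (zopp a) = zopp (f a).
Proof. intro H. apply z_opp_uniq. rewrite <- H, zaddN. apply additive0; auto. Qed.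

Definition lsum {I : Type} {A : Zmod} (g : I -> A) (l : list I) : A :=
  fold_right (fun i acc => zadd (g i) acc) zzero l.

Lemma lsum_app_cons I {A : Zmod} (g : I -> A) l1 i l2 :
  lsum g (l1 ++ i :: l2) = zadd (g i) (lsum g (l1 ++ l2)).
Proof.
  induction l1 as [|j l1 IH]; simpl; [reflexivity|].
  change (zadd (g j) (lsum g (l1 ++ i :: l2)) = zadd (g i) (zadd (g j) (lsum g (l1 ++ l2)))).
  rewrite IH. apply zadd_lc.
Qed.

Lemma lsum_supp_eq I {A : Zmod} (g : I -> A) l1 : forall l2,
  NoDup l1 -> NoDup l2 -> (forall i, g i <> zzero -> (In i l1 <-> In i l2)) ->
  lsum g l1 = lsum g l2.
Proof.
  induction l1 as [|i l1 IH]; intros l2 N1 N2 H.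
  - symmetry. induction l2 as [|j l2 IH2]; [reflexivity|].
    change (zadd (g j) (lsum g l2) = zzero).
    inversion N2; subst. rewrite IH2; auto.
    + destruct (classic (g j = zzero)) as [e|n]; [rewrite e; apply zadd00|].
      exfalso. apply (proj2 (H j n)). left; auto.
    + intros k Hk. split; [intro C; destruct C|]. intro. apply (proj2 (H k Hk)). right; auto.
  - inversion N1; subst. change (zadd (g i) (lsum g l1) = lsum g l2).
    destruct (classic (g i = zzero)) as [e|n].
    + rewrite e, zadd0. apply IH; auto. intros k Hk. rewrite <- (H k Hk).
      split; [intro; right; auto|]. intros [<-|]; [contradiction|auto].
    + assert (Hi : In i l2) by (apply (H i n); left; auto).
      destruct (in_split _ _ Hi) as (a & b & ->).
      rewrite lsum_app_cons. f_equal. apply IH; auto.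
      * eapply NoDup_remove_1; eauto.
      * intros k Hk. split.
        -- intro Hk1. assert (k <> i) by (intro; subst; contradiction).
           assert (In k (a ++ i :: b)) by (apply (H k Hk); right; auto).
           apply in_app_or in H1. apply in_or_app. destruct H1 as [|[|]]; auto. congruence.
        -- intro Hk1. assert (k <> i) by (intro; subst; eapply NoDup_remove_2; eauto).
           assert (In k (i :: l1)). { apply (H k Hk). apply in_app_or in Hk1. apply in_or_app.
             destruct Hk1; auto. right; right; auto. }
           destruct H1; [congruence|auto].
Qed.

Lemma finsum_L I {A : Zmod} (g : I -> A) (L : list I) :
  NoDup L -> (forall i, ~ In i L -> g i = zzero) -> finsum g = lsum g L.
Proof.
  intros N H. unfold finsum. destruct excluded_middle_informative as [Hx|Hx].
  - destruct (constructive_indefinite_description _ Hx) as [l [Nl Hl]]. simpl.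
    apply lsum_supp_eq; auto. intros i Hi. split; intro.
    + apply NNPP; intro C; apply Hi; apply H; auto.
    + apply Hl; auto.
  - exfalso. apply Hx. exists L. split; auto. intros i Hi. apply NNPP; intro C; apply Hi; apply H; auto.
Qed.

Lemma nodup_ex I (l : list I) : exists L, NoDup L /\ forall i, In i l <-> In i L.
Proof.
  induction l as [|a l [L [N H]]].
  - exists nil; split; [constructor|tauto].
  - destruct (classic (In a L)).
    + exists L; split; auto. intro i; simpl; rewrite H. split; [intros [<-|]|]; auto.
    + exists (a :: L); split; [constructor; auto|]. intro i; simpl; rewrite H; tauto.
Qed.

Lemma lsum_ext I {A : Zmod} (g h : I -> A) l :
  (forall i, In i l -> g i = h i) -> lsum g l = lsum h l.
Proof.
  induction l; simpl; intros; [reflexivity|]. unfold lsum in *; simpl.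
  rewrite H by auto; rewrite IHl by auto; reflexivity.
Qed.

Lemma lsum_zero I {A : Zmod} (g : I -> A) l :
  (forall i, In i l -> g i = zzero) -> lsum g l = zzero.
Proof.
  induction l; simpl; intros; [reflexivity|]. unfold lsum in *; simpl.
  rewrite H by auto; rewrite IHl by auto; apply zadd00.
Qed.

Lemma lsum_add I {A : Zmod} (g h : I -> A) l :
  lsum (fun i => zadd (g i) (h i)) l = zadd (lsum g l) (lsum h l).
Proof.
  induction l; simpl; [symmetry; apply zadd00|]. unfold lsum in *; simpl.
  rewrite IHl. apply zadd_ACA.
Qed.

Lemma lsum_additive I {A B : Zmod} (f : A -> B) (g : I -> A) l :
  additive f -> f (lsum g l) = lsum (fun i => f (g i)) l.
Proof.
  intro Hf. induction l; simpl; [apply additive0; auto|]. unfold lsum in *; simpl.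
  rewrite Hf, IHl; reflexivity.
Qed.

Lemma lsum_swap I J {A : Zmod} (h : I -> J -> A) l1 l2 :
  lsum (fun i => lsum (fun j => h i j) l2) l1 = lsum (fun j => lsum (fun i => h i j) l1) l2.
Proof.
  induction l1; simpl.
  - symmetry; apply lsum_zero; auto.
  - change (zadd (lsum (fun j => h a j) l2) (lsum (fun i => lsum (fun j => h i j) l2) l1)
      = lsum (fun j => zadd (h a j) (lsum (fun i => h i j) l1)) l2).
    rewrite IHl1, lsum_add. reflexivity.
Qed.

Lemma finsum_single I {A : Zmod} (g : I -> A) i :
  (forall j, j <> i -> g j = zzero) -> finsum g = g i.
Proof.
  intro H. rewrite (@finsum_L _ _ g [i]).
  - apply zadd0r.
  - repeat constructor; auto.
  - intros j Hj. apply H. intro; subst; apply Hj; left; auto.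
Qed.

Lemma lsum_single I {A : Zmod} (g : I -> A) L i :
  NoDup L -> In i L -> (forall j, j <> i -> g j = zzero) -> lsum g L = g i.
Proof.
  intros N Hi H. rewrite <- (finsum_L g N). apply finsum_single; auto.
  intros j Hj; apply H; intro; subst; contradiction.
Qed.

Lemma finsum_additive I {A B : Zmod} (f : A -> B) (g : I -> A) L :
  additive f -> NoDup L -> (forall i, ~ In i L -> g i = zzero) ->
  f (finsum g) = finsum (fun i => f (g i)).
Proof.
  intros Hf N H. rewrite (finsum_L g N H), (@finsum_L _ _ (fun i => f (g i)) L N).
  - apply lsum_additive; auto.
  - intros i Hi. rewrite H by auto. apply additive0; auto.
Qed.

Lemma finsum_add I {A : Zmod} (g h : I -> A) L :
  NoDup L -> (forall i, ~ In i L -> g i = zzero) -> (forall i, ~ In i L -> h i = zzero) ->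
  finsum (fun i => zadd (g i) (h i)) = zadd (finsum g) (finsum h).
Proof.
  intros N Hg Hh. rewrite (finsum_L g N Hg), (finsum_L h N Hh), (@finsum_L _ _ _ L N).
  - apply lsum_add.
  - intros i Hi. rewrite Hg, Hh by auto. apply zadd00.
Qed.

Lemma comp_0r {E : PreaddCat} x y z (g : Hom E y z) :
  comp g (@zzero (Hom E x y)) = zzero.
Proof. apply z_idem. rewrite <- comp_addr, zadd00. reflexivity. Qed.

Lemma Relt_ext {E : PreaddCat} (r s : Relt E) :
  (forall x y, rfun r x y = rfun s x y) -> r = s.
Proof.
  destruct r as [r Hr], s as [s Hs]; simpl; intro H.
  assert (r = s) by (apply functional_extensionality_dep; intro x;
                     apply functional_extensionality_dep; intro y; apply H).
  subst. f_equal. apply proof_irrelevance.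
Qed.

Definition sfun {E : PreaddCat} {x y : Obj E} (a : Hom E x y) (x' y' : Obj E) : Hom E x' y' :=
  match excluded_middle_informative (x = x') with
  | left ex => match excluded_middle_informative (y = y') with
     | left ey => eq_rect y (fun t => Hom E x' t) (eq_rect x (fun t => Hom E t y) a x' ex) y' ey
     | right _ => zzero end
  | right _ => zzero end.

Lemma sfun_same {E : PreaddCat} {x y : Obj E} (a : Hom E x y) : sfun a x y = a.
Proof.
  unfold sfun. destruct excluded_middle_informative as [ex|n]; [|congruence].
  destruct excluded_middle_informative as [ey|n]; [|congruence].
  rewrite (proof_irrelevance _ ex eq_refl), (proof_irrelevance _ ey eq_refl). reflexivity.
Qed.

Lemma sfun_diff {E : PreaddCat} {x y : Obj E} (a : Hom E x y) x' y' :
  ~ (x = x' /\ y = y') -> sfun a x' y' = zzero.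
Proof.
  intro H. unfold sfun. destruct excluded_middle_informative as [ex|n]; [|reflexivity].
  destruct excluded_middle_informative as [ey|n]; [|reflexivity]. tauto.
Qed.

Lemma sfun_add {E : PreaddCat} {x y : Obj E} (a b : Hom E x y) x' y' :
  sfun (zadd a b) x' y' = zadd (sfun a x' y') (sfun b x' y').
Proof.
  unfold sfun. destruct excluded_middle_informative as [ex|n]; [|symmetry; apply zadd00].
  destruct excluded_middle_informative as [ey|n]; [|symmetry; apply zadd00].
  destruct ex, ey. reflexivity.
Qed.

Lemma single_fin {E : PreaddCat} {x y : Obj E} (a : Hom E x y) :
  exists l : list (Obj E * Obj E), forall x' y', sfun a x' y' <> zzero -> In (x', y') l.
Proof.
  exists [(x, y)]. intros x' y' H. destruct (classic (x = x' /\ y = y')) as [[-> ->]|n].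
  - left; auto.
  - exfalso; apply H; apply sfun_diff; auto.
Qed.

Definition single {E : PreaddCat} {x y : Obj E} (a : Hom E x y) : Relt E :=
  {| rfun := fun x' y' => sfun a x' y'; rfin := single_fin a |}.

Definition ee {E : PreaddCat} (x : Obj E) : Relt E := single (idm x).

Lemma rzero_fin (E : PreaddCat) : exists l : list (Obj E * Obj E),
  forall x y, (@zzero (Hom E x y)) <> zzero -> In (x, y) l.
Proof. exists nil. intros x y H; exfalso; apply H; reflexivity. Qed.

Definition rzero (E : PreaddCat) : Relt E :=
  {| rfun := fun x y => zzero; rfin := rzero_fin E |}.

Definition rsumf {E : PreaddCat} {I : Type} (h : I -> Relt E) (L : list I) : Relt E :=
  fold_right (fun i acc => radd (h i) acc) (rzero E) L.

Lemma rfun_rsumf {E : PreaddCat} I (h : I -> Relt E) L x y :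
  rfun (rsumf h L) x y = lsum (fun i => rfun (h i) x y) L.
Proof. induction L; simpl; [reflexivity|]. rewrite IHL. reflexivity. Qed.

Lemma radd_rzero {E : PreaddCat} : radd (rzero E) (rzero E) = rzero E.
Proof. apply Relt_ext; intros; simpl; apply zadd00. Qed.

Lemma single_add {E : PreaddCat} {x y : Obj E} (a b : Hom E x y) :
  single (zadd a b) = radd (single a) (single b).
Proof. apply Relt_ext; intros; simpl; apply sfun_add. Qed.

Lemma rmul_e_same {E : PreaddCat} (r : Relt E) w z :
  rfun (rmul r (ee w)) w z = rfun r w z.
Proof.
  simpl. unfold rmul_fun. rewrite (@finsum_single _ _ _ w).
  - simpl. rewrite sfun_same. apply comp_id_r.
  - intros j Hj. simpl. rewrite sfun_diff by (intros [_ e]; auto). apply comp_0r.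
Qed.

Lemma rmul_e_diff {E : PreaddCat} (r : Relt E) w x z :
  x <> w -> rfun (rmul r (ee w)) x z = zzero.
Proof.
  intro H. simpl. unfold rmul_fun. apply finsum_zero. intro j. simpl.
  rewrite sfun_diff by (intros [e _]; auto). apply comp_0r.
Qed.

Lemma rmul_single {E : PreaddCat} {x y z : Obj E} (a : Hom E y z) (b : Hom E x y) :
  rmul (single a) (single b) = single (comp a b).
Proof.
  apply Relt_ext; intros x' z'. simpl. unfold rmul_fun.
  destruct (classic (x = x' /\ z = z')) as [[<- <-]|n].
  - rewrite sfun_same, (@finsum_single _ _ _ y).
    + simpl. rewrite !sfun_same. reflexivity.
    + intros j Hj. simpl. rewrite (sfun_diff a) by (intros [e _]; auto). apply comp_0l.
  - rewrite sfun_diff by auto. apply finsum_zero. intro j. simpl.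
    destruct (classic (x = x')) as [ex|nx].
    + rewrite (sfun_diff a) by (intros [_ e]; apply n; auto). apply comp_0l.
    + rewrite (sfun_diff b) by (intros [e _]; auto). apply comp_0r.
Qed.

Lemma decomp_col {E : PreaddCat} (r : Relt E) (L : list (Obj E)) :
  NoDup L -> (forall x z, ~ In x L -> rfun r x z = zzero) ->
  rsumf (fun x => rmul r (ee x)) L = r.
Proof.
  intros N H. apply Relt_ext; intros x' z. rewrite rfun_rsumf.
  destruct (classic (In x' L)) as [Hi|Hn].
  - rewrite (lsum_single _ N Hi).
    + apply rmul_e_same.
    + intros j Hj. apply rmul_e_diff. auto.
  - rewrite H by auto. apply lsum_zero. intros i Hi. apply rmul_e_diff.
    intro; subst; contradiction.
Qed.

Lemma decomp_row {E : PreaddCat} (r : Relt E) (x : Obj E) (L : list (Obj E)) :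
  NoDup L -> (forall w z, ~ In w L -> rfun r w z = zzero) ->
  rmul (ee x) r = rsumf (fun w => single (rfun r w x)) L.
Proof.
  intros N H. apply Relt_ext; intros x' z'. rewrite rfun_rsumf. simpl. unfold rmul_fun.
  destruct (classic (x = z')) as [<-|nz].
  - rewrite (@finsum_single _ _ _ x).
    + simpl. rewrite sfun_same, comp_id_l.
      destruct (classic (In x' L)) as [Hi|Hn].
      * rewrite (lsum_single _ N Hi); simpl. { symmetry; apply sfun_same. }
        intros j Hj. apply sfun_diff. intros [e _]; auto.
      * rewrite H by auto. symmetry. apply lsum_zero. intros i Hi. apply sfun_diff.
        intros [e _]; subst; contradiction.
    + intros j Hj. simpl. rewrite sfun_diff by (intros [e _]; auto). apply comp_0l.
  - rewrite finsum_zero.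
    + symmetry; apply lsum_zero; intros; apply sfun_diff; intros [_ e]; auto.
    + intro j; simpl. rewrite sfun_diff by (intros [_ e]; auto). apply comp_0l.
Qed.

Lemma act_additive {E : PreaddCat} (M : RModData E) r :
  is_RMod M -> additive (rm_act M r).
Proof. intros (_ & H & _) a b. apply H. Qed.

Lemma act_rzero {E : PreaddCat} (M : RModData E) m :
  is_RMod M -> rm_act M (rzero E) m = zzero.
Proof.
  intros (H & _). apply z_idem. rewrite <- H, radd_rzero. reflexivity.
Qed.

Lemma act_rsumf {E : PreaddCat} (M : RModData E) I (h : I -> Relt E) L m :
  is_RMod M -> rm_act M (rsumf h L) m = lsum (fun i => rm_act M (h i) m) L.
Proof.
  intro HM. induction L; simpl.
  - apply act_rzero; auto.
  - destruct HM as (H & _). rewrite H, IHL. reflexivity.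
Qed.

Lemma rhom_rsumf {E : PreaddCat} (M : RModData E) (f : Relt E -> rm_car M) I (h : I -> Relt E) L :
  RHom_from_R M f -> f (rsumf h L) = lsum (fun i => f (h i)) L.
Proof.
  intros [Ha _]. induction L; simpl.
  - apply z_idem. rewrite <- Ha, radd_rzero. reflexivity.
  - rewrite Ha, IHL. reflexivity.
Qed.

Lemma em_act_0f {E : PreaddCat} (P : EModule E) x y v :
  em_act P x y zzero v = zzero.
Proof. apply z_idem. rewrite <- em_act_addl, zadd00. reflexivity. Qed.

Lemma em_act_f0 {E : PreaddCat} (P : EModule E) x y f :
  em_act P x y f zzero = zzero.
Proof. apply additive0. apply em_act_addr. Qed.

Lemma Fact_act {E : PreaddCat} (P : EModule E) r (p : pcar P) y :
  (rm_act (F_obj P) r p : pcar P) y = finsum (fun x => em_act P x y (rfun r x y) (p x)).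
Proof. reflexivity. Qed.

Lemma act_single_F {E : PreaddCat} (P : EModule E) {y z : Obj E} (a : Hom E y z) (p : pcar P) :
  (rm_act (F_obj P) (single a) p : pcar P) z = em_act P y z a (p y).
Proof.
  rewrite Fact_act, (@finsum_single _ _ _ y).
  - simpl. rewrite sfun_same. reflexivity.
  - intros j Hj. simpl. rewrite sfun_diff by (intros [e _]; auto). apply em_act_0f.
Qed.

Lemma act_single_F_diff {E : PreaddCat} (P : EModule E) {y z : Obj E} (a : Hom E y z) (p : pcar P) w :
  w <> z -> (rm_act (F_obj P) (single a) p : pcar P) w = zzero.
Proof.
  intro H. rewrite Fact_act. apply finsum_zero. intro j. simpl.
  rewrite sfun_diff by (intros [_ e]; auto). apply em_act_0f.
Qed.

Lemma supp2 {E : PreaddCat} (r s : Relt E) : exists L, NoDup L /\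
  forall x y, ~ (In x L /\ In y L) -> rfun r x y = zzero /\ rfun s x y = zzero.
Proof.
  destruct (rfin r) as [lr Hr], (rfin s) as [ls Hs].
  destruct (nodup_ex (map fst lr ++ map snd lr ++ map fst ls ++ map snd ls)) as [L [N HL]].
  exists L. split; auto. intros x y H. split; apply NNPP; intro C; apply H.
  - specialize (Hr _ _ C). split; apply HL; rewrite !in_app_iff.
    + left. apply in_map_iff. exists (x, y); auto.
    + right; left. apply in_map_iff. exists (x, y); auto.
  - specialize (Hs _ _ C). split; apply HL; rewrite !in_app_iff.
    + right; right; left. apply in_map_iff. exists (x, y); auto.
    + right; right; right. apply in_map_iff. exists (x, y); auto.
Qed.

Lemma lsum_prod {E : PreaddCat} (P : EModule E) I (h : I -> pcar P) L y :
  (lsum (A := prodZmod P) h L : pcar P) y = lsum (fun i => h i y) L.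
Proof. induction L; [reflexivity|]. simpl. unfold padd. rewrite <- IHL. reflexivity. Qed.

Lemma F_isRMod {E : PreaddCat} (P : EModule E) : is_RMod (F_obj P).
Proof.
  split; [|split].
  - intros r s m. apply functional_extensionality_dep; intro y.
    change (finsum (fun x => em_act P x y (zadd (rfun r x y) (rfun s x y)) (m x)) =
            zadd (finsum (fun x => em_act P x y (rfun r x y) (m x)))
                 (finsum (fun x => em_act P x y (rfun s x y) (m x)))).
    destruct (supp2 r s) as [L [N HL]].
    rewrite <- (finsum_add _ _ N).
    + f_equal. apply functional_extensionality; intro x. apply em_act_addl.
    + intros x Hx. rewrite (proj1 (HL x y ltac:(tauto))). apply em_act_0f.
    + intros x Hx. rewrite (proj2 (HL x y ltac:(tauto))). apply em_act_0f.
  - intros r m n. apply functional_extensionality_dep; intro y.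
    change (finsum (fun x => em_act P x y (rfun r x y) (zadd (m x) (n x))) =
            zadd (finsum (fun x => em_act P x y (rfun r x y) (m x)))
                 (finsum (fun x => em_act P x y (rfun r x y) (n x)))).
    destruct (supp2 r r) as [L [N HL]].
    rewrite <- (finsum_add _ _ N).
    + f_equal. apply functional_extensionality; intro x. apply em_act_addr.
    + intros x Hx. rewrite (proj1 (HL x y ltac:(tauto))). apply em_act_0f.
    + intros x Hx. rewrite (proj2 (HL x y ltac:(tauto))). apply em_act_0f.
  - intros r s m. apply functional_extensionality_dep; intro z.
    change (finsum (fun x => em_act P x z (rmul_fun r s x z) (m x)) =
            finsum (fun y => em_act P y z (rfun r y z)
               (finsum (fun x => em_act P x y (rfun s x y) (m x))))).
    destruct (supp2 r s) as [L [N HL]].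
    assert (Hrm : forall x, rmul_fun r s x z = lsum (fun y => comp (rfun r y z) (rfun s x y)) L).
    { intro x. unfold rmul_fun. apply finsum_L; auto. intros y Hy.
      rewrite (proj1 (HL y z ltac:(tauto))). apply comp_0l. }
    rewrite (finsum_L _ N).
    2:{ intros x Hx. rewrite Hrm, lsum_zero. - apply em_act_0f.
        - intros y _. rewrite (proj2 (HL x y ltac:(tauto))). apply comp_0r. }
    rewrite (finsum_L _ N).
    2:{ intros y Hy. rewrite (proj1 (HL y z ltac:(tauto))). apply em_act_0f. }
    transitivity (lsum (fun x => lsum (fun y => em_act P y z (rfun r y z) (em_act P x y (rfun s x y) (m x))) L) L).
    + apply lsum_ext; intros x _. rewrite Hrm.
      rewrite (lsum_additive (f := fun f => em_act P x z f (m x))).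
      * apply lsum_ext; intros y _. apply em_act_comp.
      * intros a b; apply em_act_addl.
    + rewrite lsum_swap. apply lsum_ext; intros y _.
      rewrite (finsum_L _ N).
      * symmetry. apply lsum_additive. apply em_act_addr.
      * intros x Hx. rewrite (proj2 (HL x y ltac:(tauto))). apply em_act_0f.
Qed.

Lemma ee_idem {E : PreaddCat} (x : Obj E) : rmul (ee x) (ee x) = ee x.
Proof. unfold ee. rewrite rmul_single, comp_id_l. reflexivity. Qed.

Lemma F_cunital {E : PreaddCat} (P : EModule E) : c_unital (F_obj P).
Proof.
  split.
  - intros m n H. apply functional_extensionality_dep; intro x.
    pose proof (f_equal (fun q : pcar P => q x) (H (ee x))) as Hx. cbv beta in Hx.
    unfold ee in Hx. rewrite !act_single_F, !em_act_id in Hx. exact Hx.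
  - intros f Hf. exists (fun x => (f (ee x) : pcar P) x).
    intro r. apply functional_extensionality_dep; intro y.
    assert (Hz : forall x w, w <> x -> (f (ee x) : pcar P) w = zzero).
    { intros x w Hw. rewrite <- ee_idem, (proj2 Hf). unfold ee at 1.
      apply act_single_F_diff; auto. }
    destruct (supp2 r r) as [L [N HL]].
    replace (f r) with (f (rsumf (fun x => rmul r (ee x)) L))
      by (rewrite decomp_col; auto; intros x z Hx; apply (HL x z); tauto).
    rewrite (rhom_rsumf _ _ Hf). rewrite (@lsum_prod E P). rewrite Fact_act, (finsum_L _ N).
    + apply lsum_ext; intros x _. rewrite (proj2 Hf), Fact_act, (@finsum_single _ _ _ x).
      * reflexivity.
      * intros j Hj. rewrite Hz by auto. apply em_act_f0.
    + intros x Hx. rewrite (proj1 (HL x y ltac:(tauto))). apply em_act_0f.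
Qed.

Lemma F_mor_lin {E : PreaddCat} (P Q : EModule E) (phi : forall x, em_obj P x -> em_obj Q x) :
  EHom P Q phi -> RLinear (F_obj P) (F_obj Q) (F_mor Q phi).
Proof.
  intros [Ha Hn]. split.
  - intros a b. apply functional_extensionality_dep; intro x. apply Ha.
  - intros r m. apply functional_extensionality_dep; intro y.
    change (phi y (finsum (fun x => em_act P x y (rfun r x y) (m x))) =
            finsum (fun x => em_act Q x y (rfun r x y) (phi x (m x)))).
    destruct (supp2 r r) as [L [N HL]].
    rewrite (finsum_additive _ (Ha y) N).
    + f_equal. apply functional_extensionality; intro x. apply Hn.
    + intros x Hx. rewrite (proj1 (HL x y ltac:(tauto))). apply em_act_0f.
Qed.

Definition iota {E : PreaddCat} (P : EModule E) (x : Obj E) (v : em_obj P x) : pcar P :=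
  fun w => match excluded_middle_informative (x = w) with
           | left e => eq_rect x (em_obj P) v w e
           | right _ => zzero end.

Lemma iota_same {E : PreaddCat} (P : EModule E) x v : iota P x v x = v.
Proof.
  unfold iota. destruct excluded_middle_informative as [e|n]; [|congruence].
  rewrite (proof_irrelevance _ e eq_refl). reflexivity.
Qed.

Lemma iota_diff {E : PreaddCat} (P : EModule E) x v w : x <> w -> iota P x v w = zzero.
Proof. intro H. unfold iota. destruct excluded_middle_informative; [contradiction|reflexivity]. Qed.

Lemma iota_add {E : PreaddCat} (P : EModule E) x : additive (A := em_obj P x) (B := prodZmod P) (iota P x).
Proof.
  intros a b. apply functional_extensionality_dep; intro w. simpl. unfold padd.
  destruct (classic (x = w)) as [<-|n].
  - rewrite !iota_same. reflexivity.
  - rewrite !iota_diff by auto. symmetry; apply zadd00.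
Qed.

Lemma ee_act_iota {E : PreaddCat} (P : EModule E) (p : pcar P) y :
  rm_act (F_obj P) (ee y) p = iota P y (p y).
Proof.
  apply functional_extensionality_dep; intro w. destruct (classic (y = w)) as [<-|n].
  - unfold ee. rewrite act_single_F, em_act_id, iota_same. reflexivity.
  - unfold ee. rewrite act_single_F_diff, iota_diff; auto.
Qed.

Lemma single_act_iota {E : PreaddCat} (P : EModule E) x y (a : Hom E x y) v :
  rm_act (F_obj P) (single a) (iota P x v) = iota P y (em_act P x y a v).
Proof.
  apply functional_extensionality_dep; intro w. destruct (classic (y = w)) as [<-|n].
  - rewrite act_single_F, !iota_same. reflexivity.
  - rewrite act_single_F_diff, iota_diff; auto.
Qed.

Lemma F_faithful {E : PreaddCat} (P Q : EModule E) (phi psi : forall x, em_obj P x -> em_obj Q x) :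
  (forall p, F_mor Q phi p = F_mor Q psi p) -> forall x (v : em_obj P x), phi x v = psi x v.
Proof.
  intros H x v. pose proof (f_equal (fun q : pcar Q => q x) (H (iota P x v))) as Hx.
  cbv beta in Hx. unfold F_mor in Hx. rewrite iota_same in Hx. exact Hx.
Qed.

Lemma F_full {E : PreaddCat} (P Q : EModule E) (g : rm_car (F_obj P) -> rm_car (F_obj Q)) :
  RLinear (F_obj P) (F_obj Q) g ->
  exists phi : forall x, em_obj P x -> em_obj Q x,
    EHom P Q phi /\ forall p, g p = F_mor Q phi p.
Proof.
  intros [Ga Gl]. exists (fun y v => (g (iota P y v) : pcar Q) y). split; [split|].
  - intros x a b. simpl. rewrite iota_add, Ga. reflexivity.
  - intros x y a v. simpl. rewrite <- single_act_iota, Gl, act_single_F. reflexivity.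
  - intro p. apply functional_extensionality_dep; intro y. unfold F_mor.
    rewrite <- ee_act_iota, Gl. unfold ee. rewrite act_single_F, em_act_id. reflexivity.
Qed.

Lemma sig_ext (A : Type) (P : A -> Prop) (a b : sig P) : proj1_sig a = proj1_sig b -> a = b.
Proof. destruct a, b; simpl; intro; subst; f_equal; apply proof_irrelevance. Qed.

Lemma sfun_zero {E : PreaddCat} {x y : Obj E} x' y' : sfun (@zzero (Hom E x y)) x' y' = zzero.
Proof. apply z_idem. rewrite <- sfun_add, zadd00. reflexivity. Qed.

Lemma single_zero {E : PreaddCat} {x y : Obj E} : single (@zzero (Hom E x y)) = rzero E.
Proof. apply Relt_ext; intros; simpl; apply sfun_zero. Qed.

Lemma col_zero {E : PreaddCat} (r : Relt E) x :
  (forall z, rfun r x z = zzero) -> rmul r (ee x) = rzero E.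
Proof.
  intro H. apply Relt_ext; intros x' z. simpl rfun at 2.
  destruct (classic (x' = x)) as [->|n].
  - rewrite rmul_e_same. apply H.
  - apply rmul_e_diff; auto.
Qed.

Lemma ee_mul {E : PreaddCat} (M : RModData E) (HM : is_RMod M) x m :
  rm_act M (ee x) (rm_act M (ee x) m) = rm_act M (ee x) m.
Proof. destruct HM as (_ & _ & H). rewrite <- H, ee_idem. reflexivity. Qed.

Definition PC {E : PreaddCat} (M : RModData E) (x : Obj E) :=
  {m : rm_car M | rm_act M (ee x) m = m}.

Definition PC0 {E : PreaddCat} (M : RModData E) (HM : is_RMod M) x : PC M x :=
  exist _ zzero (additive0 (act_additive (ee x) HM)).

Lemma PCadd_pf {E : PreaddCat} (M : RModData E) (HM : is_RMod M) x (a b : PC M x) :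
  rm_act M (ee x) (zadd (proj1_sig a) (proj1_sig b)) = zadd (proj1_sig a) (proj1_sig b).
Proof. rewrite (act_additive _ HM), (proj2_sig a), (proj2_sig b). reflexivity. Qed.

Definition PCadd {E : PreaddCat} (M : RModData E) (HM : is_RMod M) x (a b : PC M x) : PC M x :=
  exist _ _ (@PCadd_pf E M HM x a b).

Lemma PCopp_pf {E : PreaddCat} (M : RModData E) (HM : is_RMod M) x (a : PC M x) :
  rm_act M (ee x) (zopp (proj1_sig a)) = zopp (proj1_sig a).
Proof. rewrite (additiveN _ (act_additive _ HM)), (proj2_sig a). reflexivity. Qed.

Definition PCopp {E : PreaddCat} (M : RModData E) (HM : is_RMod M) x (a : PC M x) : PC M x :=
  exist _ _ (@PCopp_pf E M HM x a).

Definition PZ {E : PreaddCat} (M : RModData E) (HM : is_RMod M) (x : Obj E) : Zmod.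
Proof.
  refine (@Build_Zmod (PC M x) (PC0 HM x) (@PCadd E M HM x) (@PCopp E M HM x) _ _ _ _);
  intros; apply sig_ext; simpl.
  - apply zaddA.
  - apply zaddC.
  - apply zadd0.
  - apply zaddN.
Defined.

Lemma PEact_pf {E : PreaddCat} (M : RModData E) (HM : is_RMod M) x y (a : Hom E x y) (v : PZ HM x) :
  rm_act M (ee y) (rm_act M (single a) (proj1_sig v)) = rm_act M (single a) (proj1_sig v).
Proof.
  destruct HM as (H1 & H2 & H3). rewrite <- H3. unfold ee. rewrite rmul_single, comp_id_l.
  reflexivity.
Qed.

Definition PEact {E : PreaddCat} (M : RModData E) (HM : is_RMod M) x y (a : Hom E x y) (v : PZ HM x)
  : PZ HM y := exist _ _ (@PEact_pf E M HM x y a v).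

Definition PE {E : PreaddCat} (M : RModData E) (HM : is_RMod M) : EModule E.
Proof.
  refine (@Build_EModule E (PZ HM) (@PEact E M HM) _ _ _ _).
  - intros x y f g p. apply sig_ext. simpl. rewrite single_add. apply HM.
  - intros x y f a b. apply sig_ext. simpl. apply (act_additive _ HM).
  - intros x p. apply sig_ext. simpl. apply (proj2_sig p).
  - intros x y z g f p. apply sig_ext. simpl. rewrite <- rmul_single. apply HM.
Defined.

Definition fM {E : PreaddCat} (M : RModData E) (HM : is_RMod M) (m : rm_car M) : pcar (PE HM) :=
  fun x => exist _ (rm_act M (ee x) m) (ee_mul HM x m) : PZ HM x.

Definition Fp {E : PreaddCat} (M : RModData E) (HM : is_RMod M) (p : pcar (PE HM)) (r : Relt E)
  : rm_car M := finsum (fun x => rm_act M r (proj1_sig (p x))).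
Arguments Fp {E M} HM p r.

Lemma act_PC_zero {E : PreaddCat} (M : RModData E) (HM : is_RMod M) r x (m : PC M x) :
  (forall z, rfun r x z = zzero) -> rm_act M r (proj1_sig m) = zzero.
Proof.
  intro H. rewrite <- (proj2_sig m). destruct HM as (H1 & H2 & H3) eqn:HMe.
  rewrite <- H3, col_zero by auto. apply act_rzero; auto.
Qed.

Lemma Fp_hom {E : PreaddCat} (M : RModData E) (HM : is_RMod M) p : RHom_from_R M (Fp HM p).
Proof.
  split.
  - intros r s. unfold Fp. destruct (supp2 r s) as [L [N HL]].
    rewrite <- (finsum_add _ _ N).
    + f_equal. apply functional_extensionality; intro x. apply HM.
    + intros x Hx. apply act_PC_zero; auto. intro z. apply (HL x z). tauto.
    + intros x Hx. apply act_PC_zero; auto. intro z. apply (HL x z). tauto.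
  - intros r s. unfold Fp. destruct (supp2 s s) as [L [N HL]].
    rewrite (finsum_additive _ (act_additive r HM) N).
    + f_equal. apply functional_extensionality; intro x. apply HM.
    + intros x Hx. apply act_PC_zero; auto. intro z. apply (HL x z). tauto.
Qed.

Definition gM {E : PreaddCat} (M : RModData E) (HM : is_RMod M) (HC : c_unital M)
  (p : pcar (PE HM)) : rm_car M :=
  proj1_sig (constructive_indefinite_description _ (proj2 HC (Fp HM p) (@Fp_hom E M HM p))).

Arguments gM {E M} HM HC p.
Lemma gM_spec {E : PreaddCat} (M : RModData E) (HM : is_RMod M) (HC : c_unital M) p r :
  Fp HM p r = rm_act M r (gM HM HC p).
Proof. unfold gM. destruct constructive_indefinite_description as [m Hm]. apply Hm. Qed.

Lemma fg {E : PreaddCat} (M : RModData E) (HM : is_RMod M) (HC : c_unital M) p :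
  fM HM (gM HM HC p) = p.
Proof.
  apply functional_extensionality_dep; intro x. apply sig_ext. simpl.
  rewrite <- gM_spec. unfold Fp. rewrite (@finsum_single _ _ _ x).
  - apply (proj2_sig (p x)).
  - intros w Hw. apply act_PC_zero; auto. intro z. simpl. apply sfun_diff. intros [e _]; auto.
Qed.

Lemma gf {E : PreaddCat} (M : RModData E) (HM : is_RMod M) (HC : c_unital M) m :
  gM HM HC (fM HM m) = m.
Proof.
  apply (proj1 HC). intro r. rewrite <- gM_spec. unfold Fp.
  destruct (supp2 r r) as [L [N HL]].
  rewrite (finsum_L _ N).
  2:{ intros x Hx. apply act_PC_zero; auto. intro z. apply (HL x z); tauto. }
  simpl. destruct HM as (H1 & H2 & H3) eqn:HMe.
  transitivity (lsum (fun x => rm_act M (rmul r (ee x)) m) L).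
  - apply lsum_ext; intros x _. symmetry; apply H3.
  - rewrite <- act_rsumf by auto. rewrite decomp_col; auto.
    intros x z Hx. apply (HL x z); tauto.
Qed.

Lemma fM_lin {E : PreaddCat} (M : RModData E) (HM : is_RMod M) :
  RLinear M (F_obj (PE HM)) (fM HM).
Proof.
  split.
  - intros a b. apply functional_extensionality_dep; intro x. apply sig_ext. simpl.
    apply (act_additive _ HM).
  - intros r m. apply functional_extensionality_dep; intro y. apply sig_ext.
    change (rm_act M (ee y) (rm_act M r m) =
      proj1_sig (finsum (A := PZ HM y) (fun w => em_act (PE HM) w y (rfun r w y) (fM HM m w)))).
    destruct (supp2 r r) as [L [N HL]].
    rewrite (finsum_additive (A := PZ HM y) (B := rm_car M) (f := @proj1_sig _ _) _ (fun a b => eq_refl) N).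
    2:{ intros w Hw. rewrite (proj1 (HL w y ltac:(tauto))). exact (em_act_0f (PE HM) w y (fM HM m w)). }
    simpl. destruct HM as (H1 & H2 & H3) eqn:HMe.
    rewrite <- H3, (decomp_row r y N) by (intros w z Hw; apply (HL w z); tauto).
    rewrite act_rsumf by auto. rewrite (finsum_L _ N).
    + apply lsum_ext; intros w _. rewrite <- H3. unfold ee. rewrite rmul_single, comp_id_r.
      reflexivity.
    + intros w Hw. rewrite (proj1 (HL w y ltac:(tauto))), <- H3, single_zero, (@col_zero E (rzero E) w) by (intro; reflexivity).
      apply act_rzero; auto.
Qed.

Lemma ess_surj {E : PreaddCat} (M : RModData E) : is_RMod M -> c_unital M ->
      exists (P : EModule E) (f : rm_car M -> rm_car (F_obj P))
             (g : rm_car (F_obj P) -> rm_car M),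
        RLinear M (F_obj P) f /\ RLinear (F_obj P) M g /\
        (forall m, g (f m) = m) /\ (forall p, f (g p) = p).
Proof.
  intros HM HC. exists (PE HM), (fM HM), (gM HM HC).
  pose proof (fM_lin HM) as [Fa Fl].
  split; [apply fM_lin|]. split; [|split; intros; [apply gf|apply fg]].
  split.
  - intros a b. rewrite <- (fg HC a), <- (fg HC b), <- Fa, !gf. reflexivity.
  - intros r p. rewrite <- (fg HC p) at 1. rewrite <- Fl, gf. reflexivity.
Qed.

Theorem proposition6p6 : forall E : PreaddCat,
  (* F(P) = prod_x P(x), with (r p)(y) = sum_x r(x,y).p(x),
     is a c-unital left R_E-module *)
  (forall P : EModule E, is_RMod (F_obj P) /\ c_unital (F_obj P)) /\
  (* F is a functor: on morphisms it acts componentwise, giving R-linear maps *)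
  (forall (P Q : EModule E) (phi : forall x, em_obj P x -> em_obj Q x),
      EHom P Q phi -> RLinear (F_obj P) (F_obj Q) (F_mor Q phi)) /\
  (* F is faithful *)
  (forall (P Q : EModule E) (phi psi : forall x, em_obj P x -> em_obj Q x),
      EHom P Q phi -> EHom P Q psi ->
      (forall p, F_mor Q phi p = F_mor Q psi p) ->
      forall x (v : em_obj P x), phi x v = psi x v) /\
  (* F is full *)
  (forall (P Q : EModule E) (g : rm_car (F_obj P) -> rm_car (F_obj Q)),
      RLinear (F_obj P) (F_obj Q) g ->
      exists phi : forall x, em_obj P x -> em_obj Q x,
        EHom P Q phi /\ forall p, g p = F_mor Q phi p) /\
  (* F is essentially surjective onto the c-unital left R_E-modules *)
  (forall M : RModData E, is_RMod M -> c_unital M ->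
      exists (P : EModule E) (f : rm_car M -> rm_car (F_obj P))
             (g : rm_car (F_obj P) -> rm_car M),
        RLinear M (F_obj P) f /\ RLinear (F_obj P) M g /\
        (forall m, g (f m) = m) /\ (forall p, f (g p) = p)).
Proof.
  intro E. split; [|split; [|split; [|split]]].
  - intro P. split; [apply F_isRMod|apply F_cunital].
  - intros; apply F_mor_lin; auto.
  - intros P Q phi psi _ _ H. apply F_faithful; auto.
  - intros; apply F_full; auto.
  - intros M HM HC. apply ess_surj; auto.
Qed.
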